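(* Let $p\in\{3,4,\dots\}$, $a\ge0$, $b>0$ satisfy either ($a>0$ and $b\in[p/2-1,p/2]$) or ($a=0$ and $b\in[p/2-1,p/2)$). There exists a constant $c\in(0,\infty)$ (possibly depending on $p,a,b$) such that $\frac{w_{k-1}(n)}{w_{k-1}(n+1)}\le c$ for all $n\in\mathbb{Z}^+$ and all $k\in\{1,2,3\}$.
   Context: $\mathbb{Z}^+=\{0,1,2,\dots\}$; $g_0(z)=(a+z)^{-b}$; for $n\in\mathbb{Z}^+$ and $k\in\{0,1,2,3\}$, $w_k(n)=\int_0^\infty\frac{g_0(z)(z/2)^{n+p/2+k-1}e^{-z/2}}{2\Gamma(n+p/2)}dz$. *)

(* Defs.v *)
From HB Require Import structures.
From mathcomp Require Import all_boot all_order all_algebra.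
From mathcomp Require Import all_classical all_reals all_analysis.
Set Implicit Arguments. Unset Strict Implicit. Unset Printing Implicit Defensive.
Import Order.TTheory GRing.Theory Num.Theory.
Local Open Scope classical_set_scope.
Local Open Scope ring_scope.

Definition Gammaf {R : realType} (s : R) : R :=
  Rintegral (@lebesgue_measure R) `]0, +oo[
    (fun t => t `^ (s - 1) * expR (- t)).

Definition g0 {R : realType} (a b : R) (z : R) : R := (a + z) `^ (- b).

Definition w {R : realType} (p : nat) (a b : R) (k n : nat) : R :=
  Rintegral (@lebesgue_measure R) `]0, +oo[
    (fun z => g0 a b z * (z / 2) `^ (n%:R + p%:R / 2 + k%:R - 1)
              * expR (- (z / 2)) / (2 * Gammaf (n%:R + p%:R / 2))).

(* Main.v *)
Require Import Defs.
From HB Require Import structures.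
From mathcomp Require Import all_boot all_order all_algebra.
From mathcomp Require Import all_classical all_reals all_analysis.
From mathcomp Require Import ring lra.
From mathcomp Require Import measurable_realfun.
Set Implicit Arguments. Unset Strict Implicit. Unset Printing Implicit Defensive.
Import Order.TTheory GRing.Theory Num.Theory.
Import numFieldNormedType.Exports.
Local Open Scope classical_set_scope.
Local Open Scope ring_scope.
Section S.
Context {R : realType}.
Notation mu := (@lebesgue_measure R).
Lemma ftc_id (f g F : R -> R) (e X : R) : 0 < e -> e < X ->
  (forall x : R, 0 < x -> {for x, continuous f}) ->
  (forall x : R, 0 < x -> {for x, continuous g}) ->
  (forall x : R, 0 < x -> is_derive x 1 F (f x - g x)) ->
  \int[mu]_(x in `[e, X]) f x = \int[mu]_(x in `[e, X]) g x + (F X - F e).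
Proof.
move=> e0 eX cf cg dF.
have pos x : x \in `[e, X] -> 0 < x.
  by rewrite in_itv/= => /andP[ex _]; exact: lt_le_trans ex.
have cfw : {within `[e, X], continuous f}.
  by apply: continuous_in_subspaceT => x /[1!inE] /pos /cf.
have cgw : {within `[e, X], continuous g}.
  by apply: continuous_in_subspaceT => x /[1!inE] /pos /cg.
have ci h : {within `[e, X], continuous h} -> mu.-integrable `[e, X] (EFin \o h).
  by move=> ch; apply: continuous_compact_integrable => //; exact: segment_compact.
have cfg : {within `[e, X], continuous (fun x => f x - g x)}.
  apply: continuous_in_subspaceT => x /[1!inE] /pos x0.
  by apply: continuousB; [exact: cf|exact: cg].
have contF x : 0 < x -> {for x, continuous F}.
  move=> x0; apply/differentiable_continuous/derivable1_diffP.
  by have [] := dF x x0.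
have dFl : derivable_oo_LRcontinuous F e X.
  split.
  - move=> x; rewrite in_itv/= => /andP[ex _].
    by have [] := dF x (lt_trans e0 ex).
  - exact/cvg_at_right_filter/contF.
  - exact/cvg_at_left_filter/contF/(lt_trans e0 eX).
have d1 : {in `]e, X[, F^`()%classic =1 (fun x => f x - g x)}.
  move=> x; rewrite in_itv/= => /andP[ex _].
  have := dF x (lt_trans e0 ex) => H.
  by rewrite derive1E derive_val.
have := continuous_FTC2 eX cfg dFl d1.
rewrite -EFinB => H.
have : \int[mu]_(x in `[e, X]) (f x - g x) = F X - F e.
  by rewrite /Rintegral H.
rewrite RintegralB //; [|exact: ci|exact: ci].
move=> <-; ring.
Qed.
Lemma mpos (u : R -> R) : (forall x : R, 0 < x -> {for x, continuous u}) ->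
  measurable_fun (`]0, +oo[%classic : set R) u.
Proof.
move=> cu; apply: measurable_realfun.open_continuous_measurable_fun; first exact: rray_open.
by move=> x; rewrite inE/= in_itv/= andbT => /cu.
Qed.

Definition Pos : set R := `]0, +oo[.
Definition A (i : nat) : set R := `[i.+2%:R^-1, i.+2%:R].

Lemma A_sub i : A i `<=` (`]0, +oo[%classic : set R).
Proof.
move=> x; rewrite /A/= !in_itv/= andbT => /andP[+ _].
by apply: lt_le_trans; rewrite invr_gt0 ltr0n.
Qed.

Lemma A_nd : {homo A : n m / (n <= m)%N >-> (n <= m)%O}.
Proof.
move=> n m nm; rewrite /A; apply/subsetPset; apply: subset_itv; rewrite bnd_simp.
  by rewrite lef_pV2 ?posrE ?ltr0n // ler_nat.
by rewrite ler_nat.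
Qed.

Lemma A_cup : \bigcup_i A i = (`]0, +oo[%classic : set R).
Proof.
apply/seteqP; split; first by move=> x [i _]; exact: A_sub.
move=> x; rewrite /= in_itv/= andbT => x0.
have xi : 0 < x^-1 by rewrite invr_gt0.
have h : 0 <= x + x^-1 by rewrite addr_ge0 // ltW.
have := archi_boundP h; set N := Num.Def.archi_bound _ => hN.
exists N => //; rewrite /A/= in_itv/=; apply/andP; split.
  have e2 : (N.+2%:R : R) = N%:R + 2 by rewrite -addn2 natrD.
  rewrite -[x]invrK lef_pV2 ?posrE ?ltr0n //.
  rewrite e2; lra.
have e2 : (N.+2%:R : R) = N%:R + 2 by rewrite -addn2 natrD.
rewrite e2; lra.
Qed.

Lemma lim_le (u : R -> R) (v : \bar R) (C : R) :
  (forall x : R, 0 < x -> {for x, continuous u}) ->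
  (forall x : R, 0 < x -> 0 <= u x) ->
  (forall i, (\int[mu]_(x in A i) (u x)%:E <= v + (C / i.+1%:R)%:E)%E) ->
  (\int[mu]_(x in Pos) (u x)%:E <= v)%E.
Proof.
move=> cu u0 hi.
have mA i : measurable (A i) by exact: measurable_itv.
have mu' i : measurable_fun (A i) (fun x => (u x)%:E).
  apply/measurable_EFinP; apply: (measurable_funS (E:=Pos)).
  - exact: measurable_itv.
  - exact: A_sub.
  - exact: mpos.
have A0 i x : A i x -> 0 < x.
  by move/A_sub; rewrite /= in_itv/= andbT.
have cv := ge0_nondecreasing_set_cvg_integral (mu:=mu) A_nd mA mu'
  (fun i x Ax => (ltac:(by rewrite lee_fin u0 // (A0 i)))).
rewrite A_cup -/Pos in cv.
case: v hi => [r| |] hi; last 2 first.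
- by rewrite leey.
- have := hi 0%N; rewrite addNye leeNy_eq => /eqP H.
  have : (0 <= \int[mu]_(x in A 0) (u x)%:E)%E.
    by apply: integral_ge0 => x Ax; rewrite lee_fin u0 //; exact: (A0 0%N).
  by rewrite H.
apply/lee_addgt0Pr => eps eps0.
apply: (cvge_to_le cv).
have h : 0 <= `|C| / eps by rewrite divr_ge0 // ltW.
have := archi_boundP h; set N := Num.Def.archi_bound _ => hN.
exists N => // i /= Ni.
apply: le_trans (hi i) _; rewrite -EFinD lee_fin lerD2l.
have hi1 : (0:R) < i.+1%:R by rewrite ltr0n.
have h2 : `|C| / eps < i.+1%:R.
  by apply: lt_le_trans hN _; rewrite ler_nat; apply: leq_trans Ni _.
rewrite ltr_pdivrMr // in h2.
rewrite ler_pdivrMr //.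
have := ler_norm C; nra.
Qed.


Lemma decay (r y : R) (N : nat) : 0 <= y -> 0 <= r -> r <= N%:R ->
  y `^ r * expR (- y) <= N.+1%:R ^+ N.+1 / (1 + y).
Proof.
move=> y0 r0 rN.
have y1 : 0 < 1 + y by lra.
have h1 : y `^ r <= (1 + y) ^+ N.
  apply: (@le_trans _ _ ((1 + y) `^ r)).
    by apply: ge0_ler_powR => //; rewrite ?nnegrE; lra.
  rewrite -powR_mulrn; last lra.
  by apply: ler_powR => //; lra.
have hN : (0:R) < N.+1%:R by rewrite ltr0n.
have h2 : ((1 + y) / N.+1%:R) ^+ N.+1 <= expR y.
  have -> : expR y = expR (y / N.+1%:R) ^+ N.+1.
    by rewrite -expRM_natl; congr expR; field; rewrite gt_eqF.
  apply: lerXn2r; rewrite ?nnegrE.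
  - by apply: divr_ge0; [lra|exact: ltW].
  - exact: expR_ge0.
  apply: le_trans (expR_ge1Dx _).
  by rewrite mulrDl mul1r lerD2r invf_le1 ?ltr0n // ler1n.
have K0 : 0 < N.+1%:R ^+ N.+1 :> R by rewrite exprn_gt0.
rewrite expr_div_n exprSr ler_pdivrMr // in h2.
rewrite expRN ler_pdivlMr // mulrAC ler_pdivrMr ?expR_gt0 //.
have := powR_ge0 y r.
set P := (1 + y) ^+ N in h1 h2 *.
set E := expR y in h2 *.
set K := N.+1%:R ^+ N.+1 in h2 K0 *.
move=> hr; nra.
Qed.
Lemma d_shift (a x : R) : is_derive x 1 (fun z => a + z) 1.
Proof.
have := is_deriveD (f := cst a) (g := id) (x := x) (v := 1) (df := 0) (dg := 1).
by rewrite add0r; apply.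
Qed.

Lemma d_scale (c x : R) : is_derive x 1 (fun z => z * c) c.
Proof.
have := is_deriveM (f := id) (g := cst c) (x := x) (v := 1) (df := 1) (dg := 0).
rewrite /= scaler0 add0r /GRing.scale /= mulr1; apply.
Qed.

Lemma d_g0 (a b x : R) : 0 < a + x ->
  is_derive x 1 (fun z => (a + z) `^ (- b)) (- b * (a + x) `^ (- b - 1)).
Proof.
move=> ax.
have := is_derive1_comp (f := fun z : R => z `^ (-b)) (g := fun z => a + z) (x := x)
  (a := - b * (a + x) `^ (- b - 1)) (b := 1).
rewrite mulr1; apply; [exact: is_derive1_powR | exact: d_shift].
Qed.

Lemma d_pw (s x : R) : 0 < x ->
  is_derive x 1 (fun z => (z / 2) `^ s) (s * (x / 2) `^ (s - 1) * 2^-1).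
Proof.
move=> x0.
have := is_derive1_comp (f := fun z : R => z `^ s) (g := fun z => z / 2) (x := x)
  (a := s * (x / 2) `^ (s - 1)) (b := 2^-1).
apply; [apply: is_derive1_powR; exact: divr_gt0 | exact: d_scale].
Qed.

Lemma d_ex (x : R) :
  is_derive x 1 (fun z => expR (- (z / 2))) (expR (- (x / 2)) * - 2^-1).
Proof.
have hin : is_derive x 1 (fun z : R => - (z / 2)) (- 2^-1).
  have := is_deriveN (f := fun z : R => z / 2) (x := x) (v := 1) (df := 2^-1).
  apply; exact: d_scale.
have := is_derive1_comp (f := expR) (g := fun z => - (z / 2)) (x := x)
  (a := expR (- (x / 2))) (b := - 2^-1).
move=> H; apply: H; try exact: hin; exact: is_derive_expR.
Qed.

Definition f2 (a b s z : R) := g0 a b z * (z / 2) `^ s * expR (- (z / 2)).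

Lemma dPhi (a b s x : R) : 0 <= a -> 0 < x ->
  is_derive x 1 (fun z => 2 * f2 a b (s + 1) z)
    (((s + 1) - b * x / (a + x)) * f2 a b s x - f2 a b (s + 1) x).
Proof.
move=> a0 x0.
have ax : 0 < a + x by rewrite ltr_pwDr.
have H1 := d_g0 b ax.
have H2 := d_pw (s + 1) x0.
have H3 := d_ex x.
have H := is_deriveM (is_deriveM H1 H2) H3.
have H4 := is_deriveZ 2 H.
apply: is_derive_eq H4 _.
rewrite /f2 /g0 /GRing.scale /= addrK.
have e1 : (a + x) `^ (- b - 1) = (a + x) `^ (- b) / (a + x).
  rewrite powRB; last by rewrite (gt_eqF ax) implybT.
  by rewrite powRr1 // ltW.
have e2 : (x / 2) `^ (s + 1) = (x / 2) `^ s * (x / 2).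
  have x2 : 0 < x / 2 by rewrite divr_gt0.
  rewrite powRD; last by rewrite (gt_eqF x2) implybT.
  by rewrite powRr1 // ltW.
rewrite ?fctE /= e1 e2.
field; rewrite gt_eqF //.
Qed.

Lemma A0 i (x : R) : A i x -> 0 < x.
Proof. by move/A_sub; rewrite /= in_itv/= andbT. Qed.

Lemma A0_Pos (x : R) : Pos x -> 0 < x.
Proof. by rewrite /Pos/= in_itv/= andbT. Qed.

Lemma int_A (h : R -> R) i : (forall x : R, 0 < x -> {for x, continuous h}) ->
  (\int[mu]_(x in A i) (h x)%:E)%E = (\int[mu]_(x in A i) h x)%:E.
Proof.
move=> ch.
have hi : mu.-integrable (A i) (EFin \o h).
  apply: continuous_compact_integrable; first exact: segment_compact.
  by apply: continuous_in_subspaceT => x /[1!inE] /A0 /ch.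
rewrite /Rintegral fineK //; apply: integrable_fin_num => //; exact: measurable_itv.
Qed.

Lemma int_A_le (h : R -> R) i : (forall x : R, 0 < x -> {for x, continuous h}) ->
  (forall x : R, 0 < x -> 0 <= h x) ->
  (\int[mu]_(x in A i) (h x)%:E <= \int[mu]_(x in Pos) (h x)%:E)%E.
Proof.
move=> ch h0.
apply: ge0_subset_integral.
- exact: measurable_itv.
- exact: measurable_itv.
- by apply/measurable_EFinP; exact: mpos.
- by move=> x /A0_Pos x0; rewrite lee_fin h0.
- exact: A_sub.
Qed.

Lemma cont_f2 (a b s x : R) : 0 <= a -> 0 < x -> {for x, continuous (f2 a b s)}.
Proof.
move=> a0 x0.
have ax : 0 < a + x by rewrite ltr_pwDr.
have [D _] := is_deriveM (is_deriveM (d_g0 b ax) (d_pw s x0)) (d_ex x).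
by apply/differentiable_continuous/derivable1_diffP; exact: D.
Qed.

Lemma f2_ge0 (a b s x : R) : 0 <= a -> 0 < x -> 0 <= f2 a b s x.
Proof.
by move=> a0 x0; rewrite /f2 /g0 !mulr_ge0 ?powR_ge0 ?expR_ge0.
Qed.

Definition gi (m t : R) := t `^ (m - 1) * expR (- t).

Lemma d_ex1 (x : R) : is_derive x 1 (fun z => expR (- z)) (expR (- x) * - 1).
Proof.
have := is_derive1_comp (f := expR) (g := fun z : R => - z) (x := x)
  (a := expR (- x)) (b := - 1).
move=> H; apply: H; try exact: is_deriveNid; exact: is_derive_expR.
Qed.

Lemma d_Fg (m x : R) : 0 < x ->
  is_derive x 1 (fun t => t `^ m * expR (- t)) (m * gi m x - gi (m + 1) x).
Proof.
move=> x0.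
have H := is_deriveM (is_derive1_powR m x0) (d_ex1 x).
apply: is_derive_eq H _.
rewrite /gi /GRing.scale /= addrK.
by rewrite mulrN1 mulrN; ring.
Qed.

Lemma cont_gi (m x : R) : 0 < x -> {for x, continuous (gi m)}.
Proof.
move=> x0.
have [D _] := is_deriveM (is_derive1_powR (m - 1) x0) (d_ex1 x).
by apply/differentiable_continuous/derivable1_diffP; exact: D.
Qed.

Lemma gi_ge0 (m x : R) : 0 <= gi m x.
Proof. by rewrite /gi mulr_ge0 ?powR_ge0 ?expR_ge0. Qed.

Lemma cont_cM (c : R) (h : R -> R) (x : R) : {for x, continuous h} ->
  {for x, continuous (fun t => c * h t)}.
Proof.
move=> ch; have := @continuousM R R (fun=> c) h x _ ch; apply.
exact: cst_continuous.
Qed.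

Lemma intZ (c : R) (h : R -> R) : 0 <= c ->
  (forall x : R, 0 < x -> {for x, continuous h}) ->
  (forall x : R, 0 < x -> 0 <= h x) ->
  (\int[mu]_(x in Pos) (c * h x)%:E = c%:E * \int[mu]_(x in Pos) (h x)%:E)%E.
Proof.
move=> c0 ch h0.
under eq_integral do rewrite EFinM.
apply: ge0_integralZl_EFin => //.
- exact: measurable_itv.
- by move=> x /A0_Pos x0; rewrite lee_fin h0.
- by apply/measurable_EFinP; exact: mpos.
Qed.

Lemma inv_le (i : nat) : (i.+2%:R : R)^-1 <= 1 / i.+1%:R.
Proof.
by rewrite mul1r lef_pV2 ?posrE ?ltr0n // ler_nat.
Qed.

Lemma Gamma_le (m : R) : 1 <= m ->
  (\int[mu]_(x in Pos) (gi (m + 1) x)%:E <= m%:E * \int[mu]_(x in Pos) (gi m x)%:E)%E.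
Proof.
move=> m1.
have m0 : 0 <= m by lra.
rewrite -intZ //; last by move=> *; exact: gi_ge0.
  2: by move=> *; exact: cont_gi.
apply: (@lim_le _ _ 1).
- by move=> x x0; exact: cont_gi.
- by move=> *; exact: gi_ge0.
move=> i.
set e := (i.+2%:R : R)^-1; set X := (i.+2%:R : R).
have e0 : 0 < e by rewrite invr_gt0 ltr0n.
have e1 : e <= 1 by rewrite invf_le1 ?ltr0n // ler1n.
have eX : e < X by apply: le_lt_trans e1 _; rewrite ltr1n.
have cf : forall x : R, 0 < x -> {for x, continuous (fun t => m * gi m t)}.
  by move=> x x0; apply: cont_cM; exact: cont_gi.
have := ftc_id e0 eX cf (fun x x0 => @cont_gi (m + 1) x x0) (fun x x0 => d_Fg m x0).
rewrite -/(A i) => hf.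
rewrite int_A; last by move=> x x0; exact: cont_gi.
have hg : \int[mu]_(x in A i) gi (m + 1) x =
    \int[mu]_(x in A i) (m * gi m x) - (X `^ m * expR (- X)) + (e `^ m * expR (- e)).
  by rewrite hf; ring.
rewrite hg.
have hFX : 0 <= X `^ m * expR (- X) by rewrite mulr_ge0 ?powR_ge0 ?expR_ge0.
have hFe : e `^ m * expR (- e) <= 1 / i.+1%:R.
  apply: le_trans (inv_le i).
  apply: (@le_trans _ _ (e `^ m)).
    rewrite -[leRHS]mulr1 ler_wpM2l ?powR_ge0 // expR_le1; lra.
  by apply: ge1r_powR => //; rewrite e0 e1.
have hA := int_A_le i cf (fun x x0 => mulr_ge0 m0 (gi_ge0 m x)).
rewrite int_A // in hA.
rewrite -addrA EFinD; apply: leeD => //.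
rewrite lee_fin; move: hFX hFe; set a1 := X `^ m * expR (- X); set a2 := e `^ m * expR (- e); set q := 1 / i.+1%:R; lra.
Qed.

Lemma int_A_mono (h1 h2 : R -> R) i :
  (forall x : R, 0 < x -> {for x, continuous h1}) ->
  (forall x : R, 0 < x -> {for x, continuous h2}) ->
  (forall x : R, 0 < x -> 0 <= h1 x) ->
  (forall x : R, 0 < x -> h1 x <= h2 x) ->
  (\int[mu]_(x in A i) (h1 x)%:E <= \int[mu]_(x in A i) (h2 x)%:E)%E.
Proof.
move=> c1 c2 h10 h12.
have mA : measurable (A i) by exact: measurable_itv.
apply: ge0_le_integral => //.
- by move=> x /A0 x0; rewrite lee_fin h10.
- apply/measurable_EFinP; apply: (measurable_funS (E:=Pos)).
  + exact: measurable_itv.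
  + exact: A_sub.
  + exact: mpos.
- apply/measurable_EFinP; apply: (measurable_funS (E:=Pos)).
  + exact: measurable_itv.
  + exact: A_sub.
  + exact: mpos.
- by move=> x /A0 x0; rewrite lee_fin h12.
Qed.

Lemma cont_frac (a x : R) : 0 <= a -> 0 < x -> {for x, continuous (fun z : R => z / (a + z))}.
Proof.
move=> a0 x0.
have ax : a + x != 0 by rewrite gt_eqF // ltr_pwDr.
have [D _] := is_deriveM (is_derive_id x 1) (is_deriveV ax (d_shift a x)).
by apply/differentiable_continuous/derivable1_diffP; exact: D.
Qed.

Lemma K_le (a b s : R) : 0 <= a -> 0 <= b -> b <= s + 1 -> 0 <= s ->
  ((s + 1 - b)%:E * \int[mu]_(x in Pos) (f2 a b s x)%:E <=
   \int[mu]_(x in Pos) (f2 a b (s + 1) x)%:E)%E.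
Proof.
move=> a0 b0 bs s0.
have c0 : 0 <= s + 1 - b by lra.
rewrite -intZ //; last 2 first.
  by move=> x x0; exact: cont_f2.
  by move=> x x0; exact: f2_ge0.
have hs : 0 <= s + 1 by lra.
have := archi_boundP hs; set N := Num.Def.archi_bound _ => hN.
set K := (N.+1%:R : R) ^+ N.+1.
have K0 : 0 < K by rewrite exprn_gt0 // ltr0n.
apply: (@lim_le _ _ (4 * K)).
- by move=> x x0; apply: cont_cM; exact: cont_f2.
- by move=> x x0; apply: mulr_ge0 => //; exact: f2_ge0.
move=> i.
set e := (i.+2%:R : R)^-1; set X := (i.+2%:R : R).
have e0 : 0 < e by rewrite invr_gt0 ltr0n.
have e1 : e <= 1 by rewrite invf_le1 ?ltr0n // ler1n.
have X1 : 1 <= X by rewrite ler1n.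
have eX : e < X by apply: le_lt_trans e1 _; rewrite ltr1n.
pose psi := fun x => ((s + 1) - b * x / (a + x)) * f2 a b s x.
have cpsi : forall x : R, 0 < x -> {for x, continuous psi}.
  move=> x x0; apply: continuousM; last exact: cont_f2.
  apply: continuousB; first exact: cst_continuous.
  have -> : (fun x => b * x / (a + x)) = (fun x => b * (x / (a + x))).
    by apply/funext => z; rewrite mulrA.
  exact: cont_cM (cont_frac a0 x0).
have psi_ge x : 0 < x -> (s + 1 - b) * f2 a b s x <= psi x.
  move=> x0; rewrite /psi; apply: ler_wpM2r; first exact: f2_ge0.
  rewrite lerD2l lerN2 -mulrA ler_piMr //.
  have ax : 0 < a + x by rewrite ltr_pwDr.
  by rewrite ler_pdivrMr // mul1r lerDr.
have := ftc_id e0 eX cpsi (fun x x0 => @cont_f2 a b (s + 1) x a0 x0)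
  (fun x x0 => @dPhi a b s x a0 x0).
rewrite -/(A i) => hf.
apply: le_trans (int_A_mono i _ cpsi _ psi_ge) _.
- by move=> x x0; apply: cont_cM; exact: cont_f2.
- by move=> x x0; apply: mulr_ge0 => //; exact: f2_ge0.
rewrite int_A // hf.
have hA := int_A_le i (fun x x0 => @cont_f2 a b (s + 1) x a0 x0)
  (fun x x0 => @f2_ge0 a b (s + 1) x a0 x0).
rewrite int_A // in hA; last by move=> x x0; exact: cont_f2.
have He : 0 <= 2 * f2 a b (s + 1) e by rewrite mulr_ge0 // f2_ge0.
have HX : 2 * f2 a b (s + 1) X <= 4 * K / i.+1%:R.
  have g1 : g0 a b X <= 1.
    rewrite /g0 -(powRr0 (a + X)); apply: ler_powR; lra.
  have X2 : 0 <= X / 2 by apply: divr_ge0; lra.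
  have hd := @decay (s + 1) (X / 2) N X2 hs (ltW hN).
  rewrite -/K in hd.
  have P0 : 0 <= (X / 2) `^ (s + 1) * expR (- (X / 2)).
    by rewrite mulr_ge0 ?powR_ge0 ?expR_ge0.
  have g0p : 0 <= g0 a b X by rewrite /g0 powR_ge0.
  have n1 : (0 : R) < i.+1%:R by rewrite ltr0n.
  have eXn : X = i.+1%:R + 1 by rewrite /X -natr1.
  have h3 : K / (1 + X / 2) <= 2 * K / i.+1%:R.
    rewrite ler_pdivrMr; last lra.
    rewrite mulrAC ler_pdivlMr //.
    rewrite eXn; set n := (i.+1%:R : R) in n1 *; nra.
  rewrite /f2 -mulrA.
  set P := (X / 2) `^ (s + 1) * expR (- (X / 2)) in hd P0 *.
  set G := g0 a b X in g1 g0p *.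
  have : G * P <= P by rewrite -[leRHS]mul1r ler_wpM2r.
  move: h3 hd; set u := K / (1 + X / 2); set v := 2 * K / i.+1%:R.
  have -> : 4 * K / i.+1%:R = 2 * v by rewrite /v; field; rewrite gt_eqF.
  lra.
rewrite EFinD; apply: leeD; first exact: hA.
rewrite lee_fin; move: He HX; set a1 := 2 * f2 a b (s + 1) e.
set a2 := 2 * f2 a b (s + 1) X; set q := 4 * K / i.+1%:R; lra.
Qed.

Lemma fineZ (r : R) (x : \bar R) : 0 <= r -> fine (r%:E * x)%E = r * fine x.
Proof.
move=> r0; case: x => [y| |] /=; first by [].
- have [->|rp] := eqVneq r 0; first by rewrite mul0e mul0r.
  by rewrite gt0_muley ?lte_fin ?lt_def ?rp // mulr0.
- have [->|rp] := eqVneq r 0; first by rewrite mul0e mul0r.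
  by rewrite gt0_muleNy ?lte_fin ?lt_def ?rp // mulr0.
Qed.

Lemma Rint_div (h : R -> R) (D : R) : 0 <= D ->
  (forall x : R, 0 < x -> {for x, continuous h}) ->
  (forall x : R, 0 < x -> 0 <= h x) ->
  \int[mu]_(x in Pos) (h x / D) = fine (\int[mu]_(x in Pos) (h x)%:E)%E / D.
Proof.
move=> D0 ch h0.
rewrite /Rintegral.
have -> : (fun x => (h x / D)%:E) = (fun x => (D^-1 * h x)%:E).
  by apply/funext => x; rewrite mulrC.
rewrite intZ ?invr_ge0 // fineZ ?invr_ge0 //.
by rewrite mulrC.
Qed.

Definition KE (a b s : R) := (\int[mu]_(x in Pos) (f2 a b s x)%:E)%E.
Definition GE (m : R) := (\int[mu]_(x in Pos) (gi m x)%:E)%E.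

Lemma KE_ge0 a b s : 0 <= a -> (0 <= KE a b s)%E.
Proof. by move=> a0; apply: integral_ge0 => x /A0_Pos x0; rewrite lee_fin f2_ge0. Qed.

Lemma GE_ge0 m : (0 <= GE m)%E.
Proof. by apply: integral_ge0 => x _; rewrite lee_fin gi_ge0. Qed.

Lemma w_eq (p : nat) (a b : R) (j n : nat) : 0 <= a ->
  w p a b j n = fine (KE a b (n%:R + p%:R / 2 + j%:R - 1)) /
                (2 * fine (GE (n%:R + p%:R / 2))).
Proof.
move=> a0.
have D0 : 0 <= 2 * fine (GE (n%:R + p%:R / 2)).
  by rewrite mulr_ge0 // fine_ge0 // GE_ge0.
rewrite /w (@Rint_div (f2 a b (n%:R + p%:R / 2 + j%:R - 1))
  (2 * fine (GE (n%:R + p%:R / 2)))) //.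
- by move=> x x0; exact: cont_f2.
- by move=> x x0; exact: f2_ge0.
Qed.

Lemma final_real (K0 K1 G0 G1 m d B : R) : 0 <= K0 -> 0 <= K1 -> 0 <= G0 ->
  0 <= G1 -> 0 < d -> (K1 = 0 \/ d * K0 <= K1) -> (G0 = 0 \/ G1 <= m * G0) ->
  0 <= m -> m <= B * d -> 0 <= B ->
  (K0 / (2 * G0)) / (K1 / (2 * G1)) <= B.
Proof.
move=> K00 K10 G00 G10 d0 hK hG m0 mB B0.
case: hG => [->|hG]; first by rewrite mulr0 invr0 mulr0 mul0r.
case: hK => [->|hK]; first by rewrite mul0r invr0 mulr0.
have [->|G0p] := eqVneq G0 0; first by rewrite mulr0 invr0 mulr0 mul0r.
have [->|K1p] := eqVneq K1 0; first by rewrite mul0r invr0 mulr0.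
have [->|G1p] := eqVneq G1 0; first by rewrite !(mulr0, invr0).
have G0q : 0 < G0 by rewrite lt_def G0p.
have K1q : 0 < K1 by rewrite lt_def K1p.
have G1q : 0 < G1 by rewrite lt_def G1p.
have -> : K0 / (2 * G0) / (K1 / (2 * G1)) = (K0 * G1) / (G0 * K1).
  by field; rewrite !gt_eqF.
rewrite ler_pdivrMr ?mulr_gt0 //.
have h1 : K0 * G1 <= K0 * (m * G0) by rewrite ler_wpM2l.
have h2 : m * G0 <= B * d * G0 by rewrite ler_wpM2r // ltW.
have h3 : K0 * (B * d * G0) <= B * G0 * K1.
  have -> : K0 * (B * d * G0) = B * G0 * (d * K0) by ring.
  by rewrite ler_wpM2l // mulr_ge0 // ltW.
rewrite mulrA; apply: le_trans h1 _; apply: le_trans _ h3.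
by rewrite ler_wpM2l.
Qed.

Lemma Kfacts (a b s : R) : 0 <= a -> 0 <= b -> b <= s + 1 -> 0 <= s ->
  0 < s + 1 - b ->
  fine (KE a b (s + 1)) = 0 \/ (s + 1 - b) * fine (KE a b s) <= fine (KE a b (s + 1)).
Proof.
move=> a0 b0 bs s0 d0.
have H := K_le a0 b0 bs s0; rewrite -/(KE a b s) -/(KE a b (s + 1)) in H.
have h1 := KE_ge0 b (s + 1) a0; have h0 := KE_ge0 b s a0.
move: H h1 h0.
case: (KE a b (s + 1)) => [r| |] H h1 h0; last 2 first.
- by left.
- by [].
right; move: H h0.
case: (KE a b s) => [k| |] H h0 /=.
- by rewrite -EFinM lee_fin in H.
- by rewrite gt0_muley ?lte_fin in H.
- by [].
Qed.

Lemma Gfacts (m : R) : 1 <= m ->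
  fine (GE m) = 0 \/ fine (GE (m + 1)) <= m * fine (GE m).
Proof.
move=> m1; have H := Gamma_le m1; rewrite -/(GE m) -/(GE (m + 1)) in H.
have h0 := GE_ge0 m; have h1 := GE_ge0 (m + 1).
move: H h0 h1.
case: (GE m) => [g| |] H h0 h1; last 2 first.
- by left.
- by [].
right; move: H h1.
case: (GE (m + 1)) => [k| |] H h1 /=.
- by rewrite -EFinM lee_fin in H.
- by [].
- by [].
Qed.
End S.

Theorem propositionA5 (R : realType) (p : nat) (a b : R) :
  (3 <= p)%N -> 0 <= a -> 0 < b ->
  ((0 < a /\ p%:R / 2 - 1 <= b /\ b <= p%:R / 2) \/
   (a = 0 /\ p%:R / 2 - 1 <= b /\ b < p%:R / 2)) ->
  exists c : R, 0 < c /\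
    forall (n k : nat), (1 <= k <= 3)%N ->
      w p a b k.-1 n / w p a b k.-1 n.+1 <= c.
Proof.
move=> p3 a0 b0 hab.
have bp : b <= p%:R / 2 by case: hab => [[_ [_ ?]]|[_ [_ /ltW ?]]].
have p0 : (0 : R) <= p%:R / 2 by rewrite divr_ge0 // ler0n.
have [r r0 hr] : exists2 r : nat -> R, (forall j, 0 <= r j) &
    (forall j, w p a b j 0 / w p a b j 1 <= r j).
  by exists (fun j => `|w p a b j 0 / w p a b j 1|) => j; [exact: normr_ge0|exact: ler_norm].
have [c c1 cr] : exists2 c : R, 1 + p%:R / 2 <= c &
    (forall j, (j <= 2)%N -> r j <= c).
  exists (1 + p%:R / 2 + r 0%N + r 1%N + r 2%N).
    by move: (r0 0%N) (r0 1%N) (r0 2%N); lra.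
  move=> j; move: (r0 0%N) (r0 1%N) (r0 2%N).
  by case: j => [|[|[|j]]] //= *; lra.
exists c; split; first lra.
move=> n k /andP[k1 k3].
case: n => [|n].
  apply: le_trans (hr _) (cr _ _).
  by case: k k1 k3 => [|[|[|[|k]]]].
rewrite !w_eq //.
have e1 : n.+2%:R + p%:R / 2 + k.-1%:R - 1 =
  (n.+1%:R + p%:R / 2 + k.-1%:R - 1) + 1 :> R by rewrite -[n.+2]addn1 natrD; ring.
have e2 : n.+2%:R + p%:R / 2 = (n.+1%:R + p%:R / 2) + 1 :> R
  by rewrite -[n.+2]addn1 natrD; ring.
rewrite e1 e2.
have N1 : (1 : R) <= n.+1%:R by rewrite ler1n.
have j0 : (0 : R) <= k.-1%:R by rewrite ler0n.
have p3' : (3 : R) <= p%:R by rewrite ler_nat.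
have d1 : 1 <= n.+1%:R + p%:R / 2 + k.-1%:R - 1 + 1 - b by lra.
have hm : n.+1%:R + p%:R / 2 <= c * (n.+1%:R + p%:R / 2 + k.-1%:R - 1 + 1 - b).
  move: d1; set d := (X in 1 <= X) => d1.
  have : n.+1%:R <= d by rewrite /d; lra.
  move: N1 c1 p0; set q := p%:R / 2; set N := n.+1%:R => N1 c1 p0 Nd.
  have h1 : 0 <= (c - (1 + q)) * d by apply: mulr_ge0; lra.
  have h2 : 0 <= q * (d - 1) by apply: mulr_ge0; lra.
  rewrite (_ : N + q + k.-1%:R - 1 + 1 - b = d) //; nra.
apply: (final_real (m := n.+1%:R + p%:R / 2)
  (d := n.+1%:R + p%:R / 2 + k.-1%:R - 1 + 1 - b)).
- by rewrite fine_ge0 // KE_ge0.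
- by rewrite fine_ge0 // KE_ge0.
- by rewrite fine_ge0 // GE_ge0.
- by rewrite fine_ge0 // GE_ge0.
- lra.
- apply: Kfacts => //; try lra; exact: ltW.
- apply: Gfacts; lra.
- lra.
- exact: hm.
- lra.
Qed.
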